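(* Let $I$ be a connected and locally connected topological space and $h:I\to\mathbb{R}$ a positive continuous function attaining its lower bound at $v\in I$. For $y,z\in I$ define $$\lambda(y,z)=\sup\{\lambda : C_{y,\lambda}=C_{z,\lambda},\ \lambda\le h(y),\ \lambda\le h(z)\}.$$ Then for fixed $y$ the function $z\mapsto\lambda(y,z)$ is lower semi-continuous: for every $z_0\in I$, $$\liminf_{z\to z_0}\lambda(y,z)\ge\lambda(y,z_0).$$
   Context: For $x\in I$ and $\lambda\le h(x)$, $C_{x,\lambda}$ denotes the maximal connected subset of $\{y\in I: h(y)\ge\lambda\}$ containing $x$. *)

(* Defs.v *)
From HB Require Import structures.
From mathcomp Require Import all_boot all_order all_algebra.
From mathcomp Require Import all_classical all_reals all_analysis.
Set Implicit Arguments. Unset Strict Implicit. Unset Printing Implicit Defensive.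
Import Order.TTheory GRing.Theory Num.Theory numFieldNormedType.Exports.
Local Open Scope classical_set_scope.
Local Open Scope ring_scope.

Definition locally_connected (T : topologicalType) : Prop :=
  forall (x : T) (U : set T), nbhs x U ->
    exists2 V : set T, [/\ open V, V x & connected V] & V `<=` U.

(* C_{x,l}: the maximal connected subset of {y | h y >= l} containing x
   (meaningful for l <= h x). *)
Definition Ccomp (T : topologicalType) (R : realType) (h : T -> R)
  (x : T) (l : R) : set T :=
  connected_component [set y | l <= h y] x.

Definition lam (T : topologicalType) (R : realType) (h : T -> R)
  (y z : T) : R :=
  sup [set l : R | [/\ Ccomp h y l = Ccomp h z l, l <= h y & l <= h z]].

(* Main.v *)
Require Import Defs.
From HB Require Import structures.
From mathcomp Require Import all_boot all_order all_algebra.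
From mathcomp Require Import all_classical all_reals all_analysis.
Import Order.TTheory GRing.Theory Num.Theory numFieldNormedType.Exports.
Local Open Scope classical_set_scope.
Local Open Scope ring_scope.

Lemma cc_mono (T : topologicalType) (A B : set T) x :
  A x -> A `<=` B -> connected_component A x `<=` connected_component B x.
Proof.
move=> Ax AB; apply: connected_component_max.
- exact: connected_component_refl.
- by move=> w /connected_component_sub /AB.
- exact: component_connected.
Qed.

Theorem mainTheorem7 (I : topologicalType) (R : realType) (h : I -> R) (v : I)
  (I_conn : connected [set: I]) (I_lconn : locally_connected I)
  (h_cont : continuous h) (h_pos : forall x, 0 < h x)
  (h_min : forall x, h v <= h x) (y : I) :
  lower_semicontinuous (fun z : I => ((lam h y z)%:E : \bar R)).
Proof.
pose S z := [set l : R | [/\ Ccomp h y l = Ccomp h z l, l <= h y & l <= h z]].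
have Sub z : ubound (S z) (h y) by move=> l [].
have S0 z : S z (h v).
  have E : [set x | h v <= h x] = setT.
    by apply/seteqP; split=> // x _; exact: h_min.
  split; rewrite ?h_min //.
  by rewrite /Ccomp E !connected_component_id.
have hS z : has_sup (S z) by split; [exists (h v) | exists (h y)].
move=> z0 a; rewrite lte_fin => alam.
have gt0 : 0 < lam h y z0 - a by rewrite subr_gt0.
have [l [Cl lhy lhz0] al] : exists2 l, S z0 l & a < l.
  have [e Se ae] := sup_adherent gt0 (hS z0).
  by exists e; rewrite // -(subKr (lam h y z0) a).
pose l' := (a + l) / 2.
have al' : a < l' by rewrite /l' ltr_pdivlMr // mulrDr mulr1 ltrD2l.
have l'l : l' < l by rewrite /l' ltr_pdivrMr // mulrDr mulr1 ltrD2r.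
pose U := [set x | l' < h x].
have nU : nbhs z0 U.
  apply: (h_cont z0 [set r | l' < r]); apply: open_nbhs_nbhs; split.
    exact: open_gt.
  by rewrite /= (lt_le_trans l'l).
have [V [oV Vz0 cV] VU] := I_lconn z0 U nU.
exists V; first exact: open_nbhs_nbhs.
move=> z Vz; rewrite lte_fin.
have Sz : S z l'.
  split; last by have := VU z Vz; rewrite /U /= => /ltW.
  - apply: same_connected_component.
    apply: (@connected_component_trans _ _ z0).
    + apply: (@cc_mono _ [set w | l <= h w] _ y lhy).
        by move=> w /= /(le_trans (ltW l'l)).
      by rewrite /Ccomp in Cl; rewrite Cl; apply: connected_component_refl.
    + have VA : V `<=` [set w | l' <= h w].
        by move=> w Vw; have := VU w Vw; rewrite /U /= => /ltW.
      exact: (connected_component_max Vz0 VA cV).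
  - exact: le_trans (ltW l'l) lhy.
have hub : has_ubound (S z) by exists (h y); exact: Sub.
exact: (lt_le_trans al' (ub_le_sup hub Sz)).
Qed.
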